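(* Let $A_S$ be a parabolic-retractable Artin group with Coxeter matrix $(m_{s,t})_{s,t\in S}$, and let $a,b,c\in S$ be pairwise distinct. If $m_{a,b}$ is odd and $m_{a,c}$ is even, then $m_{b,c}$ is even.
   Context: A Coxeter matrix over a finite set $S$ is a matrix $M=(m_{s,t})_{s,t\in S}$ with entries in $\mathbb{N}\cup\{\infty\}$, $m_{s,s}=1$, and $m_{s,t}=m_{t,s}\ge 2$ for $s\neq t$. Write $\Pi(s,t,m)$ for the alternating word $sts\cdots$ of length $m$. The Artin group is $A_S=\langle S\mid \Pi(s,t,m_{s,t})=\Pi(t,s,m_{s,t})$ for $s\neq t$, $m_{s,t}\neq\infty\rangle$. For $X\subseteq S$, $A_X$ is the subgroup generated by $X$. A retraction of $G$ onto a subgroup $H$ is a homomorphism $\varphi:G\to H$ with $\varphi|_H=\mathrm{id}_H$. $A_S$ is parabolic-retractable if it admits a retraction onto $A_X$ for every $X\subseteq S$. ''Odd'' and ''even'' refer to finite integers ($\infty$ is neither). *)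

(* Defs.v *)
From mathcomp Require Import all_boot.
Set Implicit Arguments. Unset Strict Implicit. Unset Printing Implicit Defensive.

(* Coxeter matrix over a finite set S: entries in N ∪ {∞}, None = ∞. *)
Definition coxeter_matrix (S : finType) (m : S -> S -> option nat) : Prop :=
  (forall s, m s s = Some 1) /\
  (forall s t, m s t = m t s) /\
  (forall s t, s != t -> forall k, m s t = Some k -> 2 <= k).

(* Words in S ∪ S^{-1}: (s, false) = s, (s, true) = s^{-1}. *)
Definition word (S : finType) := seq (S * bool).

Fixpoint Pi (S : finType) (s t : S) (k : nat) : word S :=
  match k with
  | 0 => [::]
  | k'.+1 => (s, false) :: Pi t s k'
  end.

Inductive artin_eq (S : finType) (m : S -> S -> option nat) : word S -> word S -> Prop :=
  | ae_refl u : artin_eq m u u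
  | ae_sym u v : artin_eq m u v -> artin_eq m v u
  | ae_trans u v w : artin_eq m u v -> artin_eq m v w -> artin_eq m u w
  | ae_cat u u' v v' : artin_eq m u u' -> artin_eq m v v' -> artin_eq m (u ++ v) (u' ++ v')
  | ae_inv s b : artin_eq m [:: (s, b); (s, ~~ b)] [::]
  | ae_rel s t k : s != t -> m s t = Some k -> artin_eq m (Pi s t k) (Pi t s k).

Definition in_parabolic (S : finType) (m : S -> S -> option nat) (X : {set S}) (w : word S) : Prop :=
  exists w', artin_eq m w w' /\ all (fun p => p.1 \in X) w'.

(* A retraction of A_S onto A_X: a homomorphism A_S -> A_S (given on
   representatives, compatible with the congruence and multiplicative),
   with image in A_X and restricting to the identity on A_X. *)
Definition retraction_onto (S : finType) (m : S -> S -> option nat) (X : {set S})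
    (phi : word S -> word S) : Prop :=
  (forall u v, artin_eq m u v -> artin_eq m (phi u) (phi v)) /\
  (forall u v, artin_eq m (phi (u ++ v)) (phi u ++ phi v)) /\
  (forall u, in_parabolic m X (phi u)) /\
  (forall u, in_parabolic m X u -> artin_eq m (phi u) u).

Definition parabolic_retractable (S : finType) (m : S -> S -> option nat) : Prop :=
  forall X : {set S}, exists phi : word S -> word S, retraction_onto m X phi.

(* Main.v *)
Require Import Defs.
From mathcomp Require Import all_boot all_order all_algebra algC cyclotomic.
From mathcomp Require Import ring zify.
From Stdlib Require Import FunctionalExtensionality.
Import GRing.Theory Num.Theory.

Set Implicit Arguments. Unset Strict Implicit. Unset Printing Implicit Defensive.
Local Open Scope ring_scope.

Definition Vt (S : finType) := S -> algC.

Definition prim (n : nat) : algC := sval (C_prim_root_exists (ltn0Sn n)).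
Lemma primP n : (n.+1).-primitive_root (prim n).
Proof. exact: (svalP (C_prim_root_exists (ltn0Sn n))). Qed.

Definition mu (k : nat) : algC := if odd k then prim (k.*2).-1 else 'i.

Lemma m1_neq1 : (-1 : algC) != 1.
Proof.
apply/eqP => h.
have : (1 : algC) + 1 = 0 by rewrite -{2}h subrr.
by move/eqP; rewrite (_ : (1 : algC) + 1 = 2%:R) ?pnatr_eq0 // natrD.
Qed.

Lemma mu_ok k : (2 <= k)%N -> mu k ^+ (k.*2) = 1 /\ mu k ^+ 2 != 1.
Proof.
move=> k2; rewrite /mu; case: ifP => ok.
- have := primP (k.*2).-1; rewrite prednK; last by rewrite double_gt0; lia.
  move=> P; split; first exact: prim_expr_order.
  rewrite -(prim_order_dvd P); apply/negP => /dvdn_leq; lia.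
- split; last by rewrite sqrCi m1_neq1.
  by rewrite -mul2n exprM sqrCi -signr_odd ok expr0.
Qed.

Lemma mu_even k : ~~ odd k -> mu k + (mu k)^-1 = 0.
Proof. by rewrite /mu => /negbTE ->; rewrite invCi subrr. Qed.
Definition beta (S : finType) (m : S -> S -> option nat) (b0 c0 s t : S) : algC :=
  match m s t with
  | Some k => mu k + (mu k)^-1
  | None => if ((s == b0) && (t == c0)) || ((s == c0) && (t == b0)) then 2 else 0
  end.

Lemma beta_sym (S : finType) (m : S -> S -> option nat) b0 c0 s t :
  (forall s t, m s t = m t s) -> beta m b0 c0 s t = beta m b0 c0 t s.
Proof. by move=> ms; rewrite /beta ms; case: (m t s) => //; by case: (s == b0); case: (t == c0); case: (s == c0); case: (t == b0). Qed.

Definition Bm (S : finType) (m : S -> S -> option nat) b0 c0 (s t : S) : algC :=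
  if s == t then 2 else - beta m b0 c0 s t.

Definition Bf (S : finType) (m : S -> S -> option nat) b0 c0 (s : S) (x : Vt S) : algC :=
  \sum_r Bm m b0 c0 s r * x r.

Definition ev (S : finType) (t : S) : Vt S := fun r => (r == t)%:R.
Definition sig (S : finType) (m : S -> S -> option nat) b0 c0 (s : S) (x : Vt S) : Vt S :=
  fun r => x r - Bf m b0 c0 s x * ev s r.
Definition lc (S : finType) (a : algC) (x y : Vt S) : Vt S := fun r => a * x r + y r.
Definition zv (S : finType) : Vt S := fun _ => 0.

Definition linmap (S : finType) (f : Vt S -> Vt S) :=
  forall a x y, f (lc a x y) = lc a (f x) (f y).

Lemma lin_zero (S : finType) (f : Vt S -> Vt S) : linmap f -> f (@zv S) = @zv S.
Proof.
move=> hf.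
have h : @zv S = lc (-1) (@zv S) (@zv S).
  by apply: functional_extensionality => r; rewrite /lc /zv; ring.
rewrite {1}h hf; apply: functional_extensionality => r; rewrite /lc /zv; ring.
Qed.

Lemma lin_comp (S : finType) (f g : Vt S -> Vt S) :
  linmap f -> linmap g -> linmap (fun x => f (g x)).
Proof. by move=> hf hg a x y; rewrite hg hf. Qed.

Lemma lin_iter (S : finType) (f : Vt S -> Vt S) n : linmap f -> linmap (iter n f).
Proof. by move=> hf; elim: n => [|n IH] a x y //=; rewrite IH hf. Qed.


Lemma Bf_lc (S : finType) m b0 c0 (s : S) a x y :
  Bf m b0 c0 s (lc a x y) = a * Bf m b0 c0 s x + Bf m b0 c0 s y.
Proof.
rewrite /Bf /lc mulr_sumr -big_split; apply: eq_bigr => r _ /=; ring.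
Qed.

Lemma Bf_ev (S : finType) m b0 c0 (s t : S) : Bf m b0 c0 s (ev t) = Bm m b0 c0 s t.
Proof.
rewrite /Bf (bigD1 t) //= /ev eqxx mulr1 big1 ?addr0 // => r /negbTE ->.
by rewrite mulr0.
Qed.

Lemma Bf_zv (S : finType) m b0 c0 (s : S) : Bf m b0 c0 s (@zv S) = 0.
Proof. by rewrite /Bf big1 // => r _; rewrite /zv mulr0. Qed.

Lemma sig_lc (S : finType) m b0 c0 (s : S) x :
  sig m b0 c0 s x = lc (- Bf m b0 c0 s x) (ev s) x.
Proof. by apply: functional_extensionality => r; rewrite /sig /lc; ring. Qed.

Lemma sig_lin (S : finType) m b0 c0 (s : S) : linmap (sig m b0 c0 s).
Proof.
move=> a x y; apply: functional_extensionality => r; rewrite /sig Bf_lc /lc; ring.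
Qed.

Lemma sigK (S : finType) m b0 c0 (s : S) x : sig m b0 c0 s (sig m b0 c0 s x) = x.
Proof.
apply: functional_extensionality => r.
rewrite !sig_lc !Bf_lc !Bf_ev /Bm eqxx /lc; ring.
Qed.

Fixpoint evw (S : finType) m b0 c0 (w : word S) (x : Vt S) : Vt S :=
  match w with [::] => x | l :: w' => sig m b0 c0 l.1 (evw m b0 c0 w' x) end.

Lemma evw_cat (S : finType) m b0 c0 (u v : word S) x :
  evw m b0 c0 (u ++ v) x = evw m b0 c0 u (evw m b0 c0 v x).
Proof. by elim: u => //= l u ->. Qed.

Lemma evw_lin (S : finType) m b0 c0 (w : word S) : linmap (evw m b0 c0 w).
Proof. by elim: w => [|l w IH] a x y //=; rewrite IH sig_lin. Qed.

Lemma T_eig (S : finType) m b0 c0 (s t : S) (nu : algC) :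
  (forall s t, m s t = m t s) -> s != t -> nu != 0 ->
  beta m b0 c0 s t = nu + nu^-1 ->
  sig m b0 c0 t (sig m b0 c0 s (lc nu (ev t) (ev s))) =
  lc (nu ^+ 2) (lc nu (ev t) (ev s)) (@zv S).
Proof.
move=> ms st nu0 hb.
have ts : t != s by rewrite eq_sym.
apply: functional_extensionality => r.
rewrite !sig_lc !Bf_lc !Bf_ev /Bm !eqxx (negbTE st) (negbTE ts) (@beta_sym _ m b0 c0 t s ms) hb.
rewrite /lc /zv; by field.
Qed.

Lemma sum_geom0 (c : algC) k : c ^+ k = 1 -> c != 1 -> \sum_(i < k) c ^+ i = 0.
Proof.
move=> ck c1; have := subrX1 c k; rewrite ck subrr => /esym/eqP.
by rewrite mulf_eq0 subr_eq0 (negbTE c1) /= => /eqP.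
Qed.

Lemma iter_eig (S : finType) (f : Vt S -> Vt S) g c n :
  linmap f -> f g = lc c g (@zv S) -> iter n f g = lc (c ^+ n) g (@zv S).
Proof.
move=> hf hg; elim: n => [|n IH] /=.
  by apply: functional_extensionality => r; rewrite /lc /zv; ring.
rewrite IH hf hg (lin_zero hf); apply: functional_extensionality => r.
rewrite /lc /zv exprS; ring.
Qed.

Definition Ls (S : finType) (f : Vt S -> Vt S) n (y : Vt S) : Vt S :=
  fun r => \sum_(i < n) iter i f y r.

Lemma Ls_lin (S : finType) (f : Vt S -> Vt S) n : linmap f -> linmap (Ls f n).
Proof.
move=> hf a x y; apply: functional_extensionality => r.
rewrite /Ls /lc mulr_sumr -big_split; apply: eq_bigr => i _.
by rewrite (lin_iter i hf).
Qed.

Lemma Ls_eig (S : finType) (f : Vt S -> Vt S) g c n :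
  linmap f -> f g = lc c g (@zv S) -> c ^+ n = 1 -> c != 1 -> Ls f n g = @zv S.
Proof.
move=> hf hg cn c1; apply: functional_extensionality => r.
rewrite /Ls (eq_bigr (fun i : 'I_n => c ^+ i * g r)); last first.
  by move=> i _; rewrite (iter_eig i hf hg) /lc /zv addr0.
by rewrite -mulr_suml sum_geom0 // mul0r.
Qed.

Lemma iter_Ls (S : finType) (f : Vt S -> Vt S) n x :
  linmap f -> iter n f x = lc 1 x (Ls f n (fun r => f x r - x r)).
Proof.
move=> hf; elim: n => [|n IH].
  by apply: functional_extensionality => r; rewrite /lc /Ls big_ord0 /=; ring.
have e : f x = lc 1 x (fun r => f x r - x r).
  by apply: functional_extensionality => r; rewrite /lc; ring.
rewrite iterSr e (lin_iter n hf) -e IH.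
apply: functional_extensionality => r; rewrite /lc /Ls big_ord_recr /=; ring.
Qed.

Lemma Tk_id (S : finType) m b0 c0 (s t : S) k :
  (forall s t, m s t = m t s) -> s != t -> m s t = Some k -> (2 <= k)%N ->
  forall x, iter k (fun y => sig m b0 c0 t (sig m b0 c0 s y)) x = x.
Proof.
move=> ms st hm k2 x.
set T := fun y => _.
have [hk h2] := mu_ok k2.
set u := mu k.
have hb : beta m b0 c0 s t = u + u^-1 by rewrite /beta hm.
have u0 : u != 0.
  apply/eqP => h; move: hk; rewrite -/u h expr0n.
  have -> : (k.*2 == 0%N) = false by apply/negbTE; rewrite double_eq0; lia.
  by move/eqP; rewrite eq_sym oner_eq0.
have hd : u - u^-1 != 0.
  apply: contra h2; rewrite subr_eq0 => /eqP h.
  by rewrite -/u expr2 {2}h mulfV.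
have hf : linmap T by apply: lin_comp; apply: sig_lin.
have e1 := @T_eig S m b0 c0 s t u ms st u0 hb.
have e2 : T (lc u^-1 (ev t) (ev s)) = lc (u^-1 ^+ 2) (lc u^-1 (ev t) (ev s)) (@zv S).
  apply: T_eig => //; first by rewrite invr_eq0.
  by rewrite invrK addrC.
have L1 : Ls T k (lc u (ev t) (ev s)) = @zv S.
  apply: (Ls_eig hf e1); last by [].
  by rewrite -exprM mul2n.
have L2 : Ls T k (lc u^-1 (ev t) (ev s)) = @zv S.
  apply: (Ls_eig hf e2).
    by rewrite -exprM mul2n exprVn hk invr1.
  by rewrite exprVn invr_eq1.
have hL := Ls_lin k hf.
have L0 := lin_zero hL.
set d := (u - u^-1)^-1.
have et : ev t = lc d (lc u (ev t) (ev s)) (lc (-d) (lc u^-1 (ev t) (ev s)) (@zv S)).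
  apply: functional_extensionality => r; rewrite /lc /zv.
  transitivity (d * (u - u^-1) * ev t r); first by rewrite mulVf ?mul1r.
  ring.
have Lt : Ls T k (ev t) = @zv S.
  rewrite {1}et (hL d) (hL (-d)) L1 L2 L0; apply: functional_extensionality => r; rewrite /lc /zv; ring.
have es : ev s = lc (-u) (ev t) (lc u (ev t) (ev s)).
  by apply: functional_extensionality => r; rewrite /lc; ring.
have Ls0 : Ls T k (ev s) = @zv S.
  rewrite {1}es (hL (-u)) L1 Lt; apply: functional_extensionality => r; rewrite /lc /zv; ring.
rewrite (iter_Ls k x hf).
have -> : (fun r => T x r - x r) =
   lc (- Bf m b0 c0 s x) (ev s) (lc (- Bf m b0 c0 t (sig m b0 c0 s x)) (ev t) (@zv S)).
  by apply: functional_extensionality => r; rewrite /T /sig /lc /zv; ring.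
rewrite !hL Ls0 Lt L0; apply: functional_extensionality => r; rewrite /lc /zv; ring.
Qed.

Lemma Pi_odd (S : finType) (s t : S) n : Pi s t n.*2.+1 = Pi s t n.*2 ++ [:: (s, false)].
Proof.
elim: n => [|n IH] //; rewrite doubleS.
change (Pi s t n.*2.+3) with [:: (s,false), (t,false) & Pi s t n.*2.+1].
by rewrite IH.
Qed.

Lemma evw_Pi_even (S : finType) m b0 c0 (s t : S) n x :
  evw m b0 c0 (Pi s t n.*2) x = iter n (fun y => sig m b0 c0 s (sig m b0 c0 t y)) x.
Proof. by elim: n => [|n IH] //; rewrite doubleS /= IH. Qed.

Lemma braid (S : finType) m b0 c0 (s t : S) k :
  (forall s t, m s t = m t s) -> s != t -> m s t = Some k -> (2 <= k)%N ->
  forall x, evw m b0 c0 (Pi s t k) x = evw m b0 c0 (Pi t s k) x.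
Proof.
move=> ms st hm k2 x.
have hT := Tk_id b0 c0 ms st hm k2.
set T := fun y => sig m b0 c0 t (sig m b0 c0 s y) in hT.
set U := fun y => sig m b0 c0 s (sig m b0 c0 t y).
have UT : forall y, U (T y) = y by move=> y; rewrite /U /T !sigK.
have UTn : forall n z, iter n U (iter n T z) = z.
  by move=> n z; elim: n => [|n IH] //; rewrite iterSr iterS UT.
have kE := odd_double_half k.
case: (boolP (odd k)) kE => ok kE; rewrite /= ?add1n ?add0n in kE; rewrite -kE.
- set n := k./2.
  rewrite Pi_odd evw_cat /= !evw_Pi_even -/U /=.
  have -> : iter n U (sig m b0 c0 s x) = sig m b0 c0 s (iter n T x).
    by elim: n => [|n IH] //; rewrite !iterS IH.
  have hx := hT x; rewrite -kE -addnn -addSn iterD iterSr in hx.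
  by rewrite -{2}hx UTn /T sigK.
- set n := k./2.
  rewrite !evw_Pi_even -/U.
  have hx := hT x; rewrite -kE -addnn iterD in hx.
  by rewrite -{1}hx UTn.
Qed.

Lemma evw_artin (S : finType) (m : S -> S -> option nat) b0 c0 :
  coxeter_matrix m -> forall u v, artin_eq m u v ->
  forall x, evw m b0 c0 u x = evw m b0 c0 v x.
Proof.
move=> [_ [ms h2]] u v; elim => //.
- by move=> u0 v0 w0 H1 IH1 H2 IH2 x; rewrite IH1 IH2.
- by move=> u0 u1 v0 v1 H1 IHu H2 IHv x; rewrite !evw_cat IHv IHu.
- by move=> s bb x /=; rewrite sigK.
- by move=> s t k st hk x; apply: braid => //; apply: h2 st k hk.
Qed.

Definition winv (S : finType) (w : word S) : word S :=
  rev (map (fun p => (p.1, ~~ p.2)) w).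

Lemma winvK (S : finType) (w : word S) : winv (winv w) = w.
Proof.
rewrite /winv map_rev revK -map_comp.
by elim: w => [|[s bb] w IH] //=; rewrite negbK IH.
Qed.

Lemma winv_r (S : finType) (m : S -> S -> option nat) (w : word S) :
  artin_eq m (w ++ winv w) [::].
Proof.
elim: w => [|[s bb] w IH]; first exact: ae_refl.
rewrite /winv /= rev_cons -/(winv w) -cats1 -cat_cons catA.
apply: (@ae_trans _ _ _ ([:: (s, bb)] ++ [::] ++ [:: (s, ~~ bb)])).
  change (artin_eq m ([:: (s, bb)] ++ ((w ++ winv w) ++ [:: (s, ~~ bb)]))
    ([:: (s, bb)] ++ ([::] ++ [:: (s, ~~ bb)]))).
  apply: ae_cat; first exact: ae_refl.
  apply: ae_cat; first exact: IH.
  exact: ae_refl.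
exact: ae_inv.
Qed.


Lemma F_eq (S : finType) m b0 c0 X (phi : word S -> word S) :
  coxeter_matrix m -> retraction_onto m X phi ->
  forall u v, artin_eq m u v -> forall x, evw m b0 c0 (phi u) x = evw m b0 c0 (phi v) x.
Proof. by move=> hm [h1 _] u v huv x; apply: evw_artin => //; apply: h1. Qed.

Lemma F_cat (S : finType) m b0 c0 X (phi : word S -> word S) :
  coxeter_matrix m -> retraction_onto m X phi ->
  forall u v x, evw m b0 c0 (phi (u ++ v)) x =
    evw m b0 c0 (phi u) (evw m b0 c0 (phi v) x).
Proof.
by move=> hm [_ [h2 _]] u v x; rewrite -evw_cat; apply: evw_artin => //; apply: h2.
Qed.

Lemma F_par (S : finType) m b0 c0 X (phi : word S -> word S) :
  coxeter_matrix m -> retraction_onto m X phi ->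
  forall w, all (fun p => p.1 \in X) w -> forall x, evw m b0 c0 (phi w) x = evw m b0 c0 w x.
Proof.
move=> hm [_ [_ [_ h4]]] w hw x; apply: evw_artin => //; apply: h4.
by exists w; split => //; apply: ae_refl.
Qed.

Lemma F_gen (S : finType) m b0 c0 X (phi : word S -> word S) :
  coxeter_matrix m -> retraction_onto m X phi ->
  forall s, s \in X -> forall x, evw m b0 c0 (phi [:: (s, false)]) x = sig m b0 c0 s x.
Proof. by move=> hm hphi s sX x; rewrite (F_par _ _ hm hphi) //= sX. Qed.

Lemma F_inv (S : finType) m b0 c0 X (phi : word S -> word S) :
  coxeter_matrix m -> retraction_onto m X phi ->
  forall w x, evw m b0 c0 (phi w) (evw m b0 c0 (phi (winv w)) x) = x.
Proof.
move=> hm hphi w x; rewrite -(F_cat _ _ hm hphi).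
rewrite (F_eq _ _ hm hphi (winv_r m w)).
by rewrite (F_par _ _ hm hphi).
Qed.

Lemma F_inv' (S : finType) m b0 c0 X (phi : word S -> word S) :
  coxeter_matrix m -> retraction_onto m X phi ->
  forall w x, evw m b0 c0 (phi (winv w)) (evw m b0 c0 (phi w) x) = x.
Proof.
move=> hm hphi w x; have := F_inv b0 c0 hm hphi (winv w) x; by rewrite winvK.
Qed.

Lemma F_X (S : finType) m b0 c0 X (phi : word S -> word S) :
  coxeter_matrix m -> retraction_onto m X phi ->
  forall w, exists w', all (fun p => p.1 \in X) w' /\
     forall x, evw m b0 c0 (phi w) x = evw m b0 c0 w' x.
Proof.
move=> hm [h1 [h2 [h3 h4]]] w; have [w' [hw' hall]] := h3 w.
by exists w'; split => // x; apply: evw_artin.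
Qed.

Lemma F_conj (S : finType) m b0 c0 X (phi : word S -> word S) (s t : S) k :
  coxeter_matrix m -> retraction_onto m X phi -> s != t -> m s t = Some k -> odd k ->
  forall y, evw m b0 c0 (phi (Pi s t k./2.*2)) (evw m b0 c0 (phi [:: (s, false)]) y) =
            evw m b0 c0 (phi [:: (t, false)]) (evw m b0 c0 (phi (Pi s t k./2.*2)) y).
Proof.
move=> hm hphi st hk ok y.
have kE := odd_double_half k; rewrite ok /= add1n in kE.
have R := ae_rel st hk; rewrite -kE Pi_odd /= in R.
rewrite -!(F_cat _ _ hm hphi).
exact: (F_eq _ _ hm hphi R).
Qed.

Lemma sig_comm (S : finType) m b0 c0 (a c : S) :
  Bm m b0 c0 a c = 0 -> Bm m b0 c0 c a = 0 ->
  forall z, sig m b0 c0 a (sig m b0 c0 c z) = sig m b0 c0 c (sig m b0 c0 a z).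
Proof.
move=> h1 h2 z; apply: functional_extensionality => r.
rewrite !sig_lc !Bf_lc !Bf_ev h1 h2 /lc; ring.
Qed.

Lemma case_odd (S : finType) (m : S -> S -> option nat)
  (hm : coxeter_matrix m) (hret : parabolic_retractable m)
  (a b c : S) (hab : a != b) (hac : a != c) (hbc : b != c)
  (kab : nat) (Hab : m a b = Some kab) (Hoab : odd kab)
  (kac : nat) (Hac : m a c = Some kac) (Heac : ~~ odd kac)
  (kbc : nat) (Hbc : m b c = Some kbc) (Hobc : odd kbc) : False.
Proof.
have ms := hm.2.1.
have [phi hphi] := hret [set a; c].
have aX : a \in [set a; c] by rewrite !inE eqxx.
have cX : c \in [set a; c] by rewrite !inE eqxx orbT.
have ca : c != a by rewrite eq_sym.
have B0 : Bm m b c a c = 0.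
  by rewrite /Bm (negbTE hac) /beta Hac mu_even // oppr0.
have B0' : Bm m b c c a = 0.
  by rewrite /Bm (negbTE ca) /beta -ms Hac mu_even // oppr0.
have comm : forall w y, evw m b c (phi w) (sig m b c a y) = sig m b c a (evw m b c (phi w) y).
  move=> w y; have [w' [hw' E]] := F_X b c hm hphi w; rewrite !E; clear E.
  elim: w' hw' => [|[s bb] w' IH] //= /andP [sX hw'].
  rewrite IH //; move: sX; rewrite !inE => /orP [] /eqP -> //.
  exact: sig_comm.
set g := Pi a b kab./2.*2.
set h := Pi b c kbc./2.*2.
have hg := F_conj b c hm hphi hab Hab Hoab.
have hh := F_conj b c hm hphi hbc Hbc Hobc.
rewrite -/g in hg; rewrite -/h in hh.
set F := fun w x => evw m b c (phi w) x.
set y := F (winv g) (F (winv h) (ev a)).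
have hz : F h (F g y) = ev a by rewrite /F /y !(F_inv _ _ hm hphi).
have e1 : F h (F g (sig m b c a y)) = sig m b c c (F h (F g y)).
  rewrite /F -(F_gen b c hm hphi aX y) hg hh.
  by rewrite (F_gen b c hm hphi cX).
have key : sig m b c a (ev a) = sig m b c c (ev a).
  by rewrite -hz -e1 /F !comm.
have := congr1 (fun v => v a) key.
rewrite /sig !Bf_ev B0' /Bm /ev !eqxx (negbTE hac) => hE.
have : (2%:R : algC) = ((1 : algC) - 0 * 0%:R) - (1 - 2 * 1%:R) by ring.
by rewrite -hE subrr => /eqP; rewrite pnatr_eq0.
Qed.


Definition pv (S : finType) (b c : S) (p q : algC) : Vt S :=
  fun r => p * ev b r + q * (ev b r + ev c r).

Lemma pv_congr (S : finType) (b c : S) p q p' q' : p = p' -> q = q' -> pv b c p q = pv b c p' q'.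
Proof. by move=> -> ->. Qed.

Lemma pv_lc (S : finType) (b c : S) p q :
  pv b c p q = lc p (ev b) (lc q (ev b) (lc q (ev c) (@zv S))).
Proof. by apply: functional_extensionality => r; rewrite /pv /lc /zv; ring. Qed.

Lemma pv_b (S : finType) (b c : S) p q : b != c -> pv b c p q b = p + q.
Proof. by move=> bc; rewrite /pv /ev eqxx (negbTE bc) /=; ring. Qed.
Lemma pv_c (S : finType) (b c : S) p q : b != c -> pv b c p q c = q.
Proof. by move=> bc; rewrite /pv /ev eqxx eq_sym (negbTE bc) /=; ring. Qed.

Lemma lin_pv (S : finType) (b c : S) (F : Vt S -> Vt S) P Q p q :
  linmap F -> F (pv b c 1 0) = pv b c P Q -> F (pv b c 0 1) = pv b c 0 1 ->
  F (pv b c p q) = pv b c (p * P) (p * Q + q).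
Proof.
move=> hF h1 h2.
have -> : pv b c p q = lc p (pv b c 1 0) (lc q (pv b c 0 1) (@zv S)).
  by apply: functional_extensionality => r; rewrite /pv /lc /zv; ring.
rewrite (hF p) (hF q) h1 h2 (lin_zero hF).
by apply: functional_extensionality => r; rewrite /pv /lc /zv; ring.
Qed.

Lemma sig_pv (S : finType) (m : S -> S -> option nat) (b c : S) p q :
  (forall s t, m s t = m t s) -> b != c -> m b c = None ->
  sig m b c b (pv b c p q) = pv b c (- p) q /\
  sig m b c c (pv b c p q) = pv b c (- p) (2 * p + q).
Proof.
move=> ms bc hn.
have cb : c != b by rewrite eq_sym.
have hb1 : Bm m b c b c = -2 by rewrite /Bm (negbTE bc) /beta hn !eqxx.
have hb2 : Bm m b c c b = -2 by rewrite /Bm (negbTE cb) /beta -ms hn !eqxx orbT.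
have hb3 : Bm m b c b b = 2 by rewrite /Bm eqxx.
have hb4 : Bm m b c c c = 2 by rewrite /Bm eqxx.
split; apply: functional_extensionality => r;
  rewrite /sig pv_lc !Bf_lc !Bf_ev Bf_zv ?hb1 ?hb2 ?hb3 ?hb4 /lc /zv /pv; ring.
Qed.

Definition QF (S : finType) (b c : S) (F : Vt S -> Vt S) :=
  exists p j : int, p * p = 1 /\ F (pv b c 1 0) = pv b c p%:~R (2 * j%:~R) /\
     F (pv b c 0 1) = pv b c 0 1.

Lemma evw_QF (S : finType) (m : S -> S -> option nat) (b c : S) w :
  (forall s t, m s t = m t s) -> b != c -> m b c = None ->
  all (fun p => p.1 \in [set b; c]) w -> QF b c (evw m b c w).
Proof.
move=> ms bc hn; elim: w => [|[s bb] w IH] /=.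
  move=> _; exists 1, 0; split => //; split => //.
  by apply: pv_congr; rewrite ?rmorph1 ?rmorph0 ?mulr0.
move=> /andP [sX hw]; have [p [j [pp [e1 e2]]]] := IH hw.
move: sX; rewrite !inE => /orP [] /eqP ->.
- exists (-p), j; split; first by rewrite mulrNN.
  have [s1 _] := sig_pv p%:~R (2 * j%:~R) ms bc hn.
  have [s2 _] := sig_pv 0 1 ms bc hn.
  rewrite e1 e2 s1 s2 oppr0; split => //.
  by apply: pv_congr; rewrite ?rmorphN.
- exists (-p), (p + j); split; first by rewrite mulrNN.
  have [_ s1] := sig_pv p%:~R (2 * j%:~R) ms bc hn.
  have [_ s2] := sig_pv 0 1 ms bc hn.
  rewrite e1 e2 s1 s2 oppr0 mulr0 add0r; split => //.
  by apply: pv_congr; rewrite ?rmorphN ?rmorphD //; ring.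
Qed.

Lemma F_Pi_even (S : finType) m b0 c0 X (phi : word S -> word S) (s t : S) n y :
  coxeter_matrix m -> retraction_onto m X phi ->
  evw m b0 c0 (phi (Pi s t n.*2)) y =
  iter n (fun z => evw m b0 c0 (phi [:: (s, false)]) (evw m b0 c0 (phi [:: (t, false)]) z))
    (evw m b0 c0 (phi [::]) y).
Proof.
move=> hm hphi; elim: n => [|n IH] //; rewrite doubleS.
rewrite -[Pi s t n.*2.+2]/([:: (s, false)] ++ ([:: (t, false)] ++ Pi s t n.*2)).
by rewrite !(F_cat _ _ hm hphi) IH.
Qed.

Lemma case_inf (S : finType) (m : S -> S -> option nat)
  (hm : coxeter_matrix m) (hret : parabolic_retractable m)
  (a b c : S) (hab : a != b) (hac : a != c) (hbc : b != c)
  (kab : nat) (Hab : m a b = Some kab) (Hoab : odd kab)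
  (kac : nat) (Hac : m a c = Some kac) (Heac : ~~ odd kac)
  (Hbc : m b c = None) : False.
Proof.
have ms := hm.2.1.
have [phi hphi] := hret [set b; c].
have bX : b \in [set b; c] by rewrite !inE eqxx.
have cX : c \in [set b; c] by rewrite !inE eqxx orbT.
set F := fun w x => evw m b c (phi w) x.
have QFw : forall w, QF b c (F w).
  move=> w; have [w' [hw' E]] := F_X b c hm hphi w.
  have -> : F w = evw m b c w' by apply: functional_extensionality => x; rewrite /F E.
  exact: evw_QF.
set g := Pi a b kab./2.*2.
have hg := F_conj b c hm hphi hab Hab Hoab; rewrite -/g in hg.
have [ph [jh [pph [h1 h2]]]] := QFw g.
have [pf [jf [ppf [f1 f2]]]] := QFw (winv g).
have linF : forall w, linmap (F w) by move=> w; exact: evw_lin.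
set x := F [:: (a, false)].
have hx : forall y, x y = F (winv g) (sig m b c b (F g y)).
  move=> y; rewrite -(F_gen b c hm hphi bX) -hg.
  by rewrite /F (F_inv' _ _ hm hphi).
have [sb0 _] := sig_pv 0 1 ms hbc Hbc.
have [sb1 _] := sig_pv ph%:~R (2 * jh%:~R) ms hbc Hbc.
rewrite oppr0 in sb0.
have id1 : pv b c 1 0 = pv b c (ph%:~R * pf%:~R) (ph%:~R * (2 * jf%:~R) + 2 * jh%:~R).
  rewrite -(lin_pv _ _ (linF (winv g)) f1 f2) -h1.
  by rewrite /F (F_inv' _ _ hm hphi).
have hc : ph%:~R * (2 * jf%:~R) + 2 * jh%:~R = 0 :> algC.
  by have := congr1 (fun v => v c) id1; rewrite !pv_c.
set t : algC := - ph%:~R * (2 * jf%:~R) + 2 * jh%:~R.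
have x1 : x (pv b c 1 0) = pv b c (-1) t.
  rewrite hx h1 sb1 (lin_pv _ _ (linF (winv g)) f1 f2).
  apply: pv_congr; last by rewrite /t; ring.
  have hpp : ph%:~R * pf%:~R = 1 :> algC.
    by have := congr1 (fun v => v b) id1; rewrite !pv_b // hc !addr0 => <-.
  by rewrite mulNr hpp.
have x2 : x (pv b c 0 1) = pv b c 0 1 by rewrite hx h2 sb0 f2.
have hxl : linmap x by exact: linF.
have t2 : (2 : algC) - t != 0.
  have -> : (2 : algC) - t = ((2 + 4 * ph * jf)%:~R : algC).
    rewrite rmorphD rmorphM rmorphM /=.
    transitivity ((2 : algC) + 4%:~R * ph%:~R * jf%:~R
                   - (ph%:~R * (2 * jf%:~R) + 2 * jh%:~R)); last by rewrite hc subr0.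
    rewrite /t; ring.
  rewrite intr_eq0; apply/eqP; nia.
have kE := odd_double_half kac; rewrite (negbTE Heac) /= add0n in kE.
set n := kac./2 in kE.
have n0 : n != 0%N.
  have := hm.2.2 a c hac kac Hac; rewrite -kE; lia.
have R := ae_rel hac Hac; rewrite -kE in R.
have E := F_eq b c hm hphi R (pv b c 1 0).
rewrite (F_Pi_even b c a c n _ hm hphi) (F_Pi_even b c c a n _ hm hphi) (F_par _ _ hm hphi) // in E.
have It1 : forall k, iter k (fun z => evw m b c (phi [:: (a, false)])
                       (evw m b c (phi [:: (c, false)]) z)) (pv b c 1 0) =
                     pv b c 1 (k%:R * (2 - t)).
  elim=> [|k IH] /=; first by apply: pv_congr => //; ring.
  rewrite IH (F_gen b c hm hphi cX) (proj2 (sig_pv _ _ ms hbc Hbc)).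
  rewrite -[evw m b c (phi [:: (a, false)]) _]/(x _) (lin_pv _ _ hxl x1 x2).
  by apply: pv_congr; rewrite -?(addn1 k) ?natrD; ring.
have It2 : forall k, iter k (fun z => evw m b c (phi [:: (c, false)])
                       (evw m b c (phi [:: (a, false)]) z)) (pv b c 1 0) =
                     pv b c 1 (k%:R * (t - 2)).
  elim=> [|k IH] /=; first by apply: pv_congr => //; ring.
  rewrite IH -[evw m b c (phi [:: (a, false)]) _]/(x _) (lin_pv _ _ hxl x1 x2).
  rewrite (F_gen b c hm hphi cX) (proj2 (sig_pv _ _ ms hbc Hbc)).
  by apply: pv_congr; rewrite -?(addn1 k) ?natrD; ring.
rewrite It1 It2 in E.
have := congr1 (fun v => v c) E; rewrite !pv_c // => E2.
have : (n%:R * (2 - t)) * 2%:R = 0 :> algC.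
  transitivity (n%:R * (2 - t) - n%:R * (t - 2) : algC); first by ring.
  by rewrite E2 subrr.
by move/eqP; rewrite !mulf_eq0 (negbTE t2) !pnatr_eq0 (negbTE n0).
Qed.

Local Close Scope ring_scope.
Unset Implicit Arguments.

Theorem lemma3p3 (S : finType) (m : S -> S -> option nat)
  (hm : coxeter_matrix m) (hret : parabolic_retractable m)
  (a b c : S) (hab : a != b) (hac : a != c) (hbc : b != c)
  (kab : nat) (Hab : m a b = Some kab) (Hoab : odd kab)
  (kac : nat) (Hac : m a c = Some kac) (Heac : ~~ odd kac) :
  exists kbc : nat, m b c = Some kbc /\ ~~ odd kbc.
Proof.
case Hbc: (m b c) => [kbc|].
- case: (boolP (odd kbc)) => ob.
  + exfalso.
    exact: (@case_odd S m hm hret a b c hab hac hbc kab Hab Hoab kac Hac Heac kbc Hbc ob).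
  + by exists kbc.
- exfalso.
  exact: (@case_inf S m hm hret a b c hab hac hbc kab Hab Hoab kac Hac Heac Hbc).
Qed.
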